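(* $\mathbf{FO}(\sim) = \mathbf{FO}(\mathrm{NE}, \sqcup)$; that is, every formula of $\mathbf{FO}(\sim)$ is equivalent (under team semantics) to some formula of $\mathbf{FO}(\mathrm{NE},\sqcup)$, and every formula of $\mathbf{FO}(\mathrm{NE},\sqcup)$ is equivalent to some formula of $\mathbf{FO}(\sim)$.
   Context: Team semantics (lax version). Let $\mathfrak M$ be a first-order structure with domain $M$. A team $X$ over $\mathfrak M$ with domain a finite set $V$ of variables is a (possibly empty) set of assignments $s: V\to M$. Satisfaction $\mathfrak M\models_X\phi$ for formulas in negation normal form: for a first-order literal $\alpha$, $\mathfrak M\models_X\alpha$ iff every $s\in X$ satisfies $\alpha$ in Tarski semantics; $\mathfrak M\models_X\psi\vee\theta$ iff $X=Y\cup Z$ for some $Y,Z\subseteq X$ with $\mathfrak M\models_Y\psi$ and $\mathfrak M\models_Z\theta$; $\mathfrak M\models_X\psi\wedge\theta$ iff $\mathfrak M\models_X\psi$ and $\mathfrak M\models_X\theta$; $\mathfrak M\models_X\exists v\psi$ iff there is $F:X\to\mathcal P(M)\setminus\{\emptyset\}$ with $\mathfrak M\models_{X[F/v]}\psi$, where $X[F/v]=\{s[m/v]:s\in X,m\in F(s)\}$; $\mathfrak M\models_X\forall v\psi$ iff $\mathfrak M\models_{X[M/v]}\psi$, where $X[M/v]=\{s[m/v]:s\in X,m\in M\}$. Extra operators: the nonemptiness atom $\mathrm{NE}$ with $\mathfrak M\models_X\mathrm{NE}$ iff $X\neq\emptyset$; classical disjunction $\mathfrak M\models_X\phi\sqcup\psi$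 iff $\mathfrak M\models_X\phi$ or $\mathfrak M\models_X\psi$; contradictory negation $\mathfrak M\models_X\sim\phi$ iff $\mathfrak M\not\models_X\phi$ (which may be applied to arbitrary formulas). $\mathbf{FO}(\ldots)$ denotes first-order logic (in negation normal form) extended with the listed atoms/operators. Two formulas are equivalent if they are satisfied by exactly the same teams in all structures. *)

(* Defs.v *)
From mathcomp Require Import all_boot.
Set Implicit Arguments. Unset Strict Implicit. Unset Printing Implicit Defensive.

Record Sig := { fsym : Type; farity : fsym -> nat;
                rsym : Type; rarity : rsym -> nat }.

Inductive term (S : Sig) : Type :=
| TVar (x : nat)
| TApp (f : fsym S) (a : 'I_(@farity S f) -> term S).

Inductive atom (S : Sig) : Type :=
| AEq (t1 t2 : term S)
| ARel (R : rsym S) (a : 'I_(@rarity S R) -> term S).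

Inductive formula (S : Sig) : Type :=
| FPos (a : atom S)
| FNeg (a : atom S)
| FOr (p q : formula S)        (* split (tensor) disjunction *)
| FAnd (p q : formula S)
| FEx (v : nat) (p : formula S)
| FAll (v : nat) (p : formula S)
| FNE
| FSqcup (p q : formula S)
| FTilde (p : formula S).

Fixpoint in_FO_tilde S (p : formula S) : Prop :=
  match p with
  | FPos _ | FNeg _ => True
  | FOr p q | FAnd p q => in_FO_tilde p /\ in_FO_tilde q
  | FEx _ p | FAll _ p => in_FO_tilde p
  | FNE => False
  | FSqcup _ _ => False
  | FTilde p => in_FO_tilde p
  end.

Fixpoint in_FO_NE_sqcup S (p : formula S) : Prop :=
  match p with
  | FPos _ | FNeg _ => True
  | FOr p q | FAnd p q => in_FO_NE_sqcup p /\ in_FO_NE_sqcup q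
  | FEx _ p | FAll _ p => in_FO_NE_sqcup p
  | FNE => True
  | FSqcup p q => in_FO_NE_sqcup p /\ in_FO_NE_sqcup q
  | FTilde _ => False
  end.

Fixpoint occurs S (x : nat) (t : term S) : Prop :=
  match t with
  | TVar y => x = y
  | TApp f a => exists i, occurs x (a i)
  end.

Definition occurs_atom S (x : nat) (a : atom S) : Prop :=
  match a with
  | AEq t1 t2 => occurs x t1 \/ occurs x t2
  | ARel R a => exists i, occurs x (a i)
  end.

Fixpoint free S (x : nat) (p : formula S) : Prop :=
  match p with
  | FPos a | FNeg a => occurs_atom x a
  | FOr p q | FAnd p q | FSqcup p q => free x p \/ free x q
  | FEx v p | FAll v p => x <> v /\ free x p
  | FNE => False
  | FTilde p => free x p
  end.

Record structure (S : Sig) := {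
  carrier : Type;
  funI : forall f : fsym S, ('I_(@farity S f) -> carrier) -> carrier;
  relI : forall R : rsym S, ('I_(@rarity S R) -> carrier) -> Prop }.

Section Semantics.
Variables (S : Sig) (A : structure S).
Local Notation M := (carrier A).

(* An assignment with a finite domain is a partial function nat -> option M;
   its domain is the set of variables mapped to Some _. *)
Definition assignment := nat -> option M.
Definition team := assignment -> Prop.

Definition upd (s : assignment) (v : nat) (m : M) : assignment :=
  fun x => if x == v then Some m else s x.

Definition team_on (V : seq nat) (X : team) : Prop :=
  forall s, X s -> forall x, (s x <> None <-> x \in V).

(* Term evaluation (relational, since assignments are partial). *)
Fixpoint tval (s : assignment) (t : term S) (m : M) : Prop :=
  match t with
  | TVar x => s x = Some m
  | TApp f a => exists ms : 'I_(@farity S f) -> M,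
      (forall i, tval s (a i) (ms i)) /\ m = @funI S A f ms
  end.

Definition lit_sat (s : assignment) (a : atom S) (b : bool) : Prop :=
  match a with
  | AEq t1 t2 => exists m1 m2, tval s t1 m1 /\ tval s t2 m2 /\
                   (if b then m1 = m2 else m1 <> m2)
  | ARel R a => exists ms : 'I_(@rarity S R) -> M,
      (forall i, tval s (a i) (ms i)) /\
      (if b then @relI S A R ms else ~ @relI S A R ms)
  end.

Fixpoint sat (p : formula S) (X : team) : Prop :=
  match p with
  | FPos a => forall s, X s -> lit_sat s a true
  | FNeg a => forall s, X s -> lit_sat s a false
  | FOr p q => exists Y Z : team,
      (forall s, X s <-> Y s \/ Z s) /\ sat p Y /\ sat q Z
  | FAnd p q => sat p X /\ sat q X
  | FEx v p => exists F : assignment -> M -> Prop,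
      (forall s, X s -> exists m, F s m) /\
      sat p (fun s' => exists s m, X s /\ F s m /\ s' = upd s v m)
  | FAll v p => sat p (fun s' => exists s m, X s /\ s' = upd s v m)
  | FNE => exists s, X s
  | FSqcup p q => sat p X \/ sat q X
  | FTilde p => ~ sat p X
  end.

End Semantics.

Definition equivalent S (p q : formula S) : Prop :=
  forall (A : structure S), inhabited (carrier A) ->
  forall (V : seq nat) (X : team A),
    team_on V X ->
    (forall x, free x p -> x \in V) ->
    (forall x, free x q -> x \in V) ->
    (sat p X <-> sat q X).

(* Main.v *)
Require Import Defs.
From mathcomp Require Import all_boot.
From Stdlib Require Import Classical FunctionalExtensionality ClassicalEpsilon.
Require Stdlib.Lists.List.

Set Implicit Arguments. Unset Strict Implicit.

Section FOsec.
Variable S : Sig.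

Inductive fo : Type :=
| OLit (a : atom S) (b : bool)
| OOr (p q : fo) | OAnd (p q : fo) | OEx (v : nat) (p : fo) | OAll (v : nat) (p : fo).

Fixpoint emb (x : fo) : formula S :=
  match x with
  | OLit a b => if b then FPos a else FNeg a
  | OOr p q => FOr (emb p) (emb q)
  | OAnd p q => FAnd (emb p) (emb q)
  | OEx v p => FEx v (emb p)
  | OAll v p => FAll v (emb p)
  end.

Fixpoint neg (x : fo) : fo :=
  match x with
  | OLit a b => OLit a (~~ b)
  | OOr p q => OAnd (neg p) (neg q)
  | OAnd p q => OOr (neg p) (neg q)
  | OEx v p => OAll v (neg p)
  | OAll v p => OEx v (neg p)
  end.

Definition top : fo := OAll 0 (OLit (AEq (TVar S 0) (TVar S 0)) true).

Lemma free_neg x y : free y (emb (neg x)) <-> free y (emb x).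
Proof. induction x; simpl; try (destruct b); simpl; firstorder. Qed.

Lemma fv_top x : ~ free x (emb top).
Proof. simpl. intros [hne [h|h]]; exact (hne h). Qed.

Definition clause := (fo * list fo)%type.
Definition cfree (C : clause) x :=
  free x (emb C.1) \/ exists b, List.In b C.2 /\ free x (emb b).

Definition cor (C1 C2 : clause) : clause :=
  (OOr C1.1 C2.1, List.map (OAnd C1.1) C1.2 ++ List.map (OAnd C2.1) C2.2).
Definition cand (C1 C2 : clause) : clause := (OAnd C1.1 C2.1, C1.2 ++ C2.2).
Definition cex v (C : clause) : clause :=
  (OEx v C.1, List.map (fun b => OEx v (OAnd C.1 b)) C.2).
Definition call v (C : clause) : clause := (OAll v C.1, List.map (OEx v) C.2).
Definition cneg (C : clause) : list clause :=
  (top, [:: neg C.1]) :: List.map (fun b => (neg b, [::])) C.2.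
Definition pairwith (f : clause -> clause -> clause) (L1 L2 : list clause) :=
  List.map (fun pr => f pr.1 pr.2) (List.list_prod L1 L2).
Fixpoint tneg (N : list clause) : list clause :=
  match N with
  | nil => [:: (top, [::])]
  | C :: N => pairwith cand (cneg C) (tneg N)
  end.

Fixpoint wit (b : list fo) : formula S :=
  match b with
  | nil => emb top
  | x :: b => FOr (FAnd (emb x) (FNE S)) (wit b)
  end.
Definition ctoF (C : clause) := FAnd (emb C.1) (wit C.2).
Definition bot := ctoF (top, [:: neg top]).
Fixpoint toF (N : list clause) :=
  match N with
  | nil => bot
  | C :: N => FSqcup (ctoF C) (toF N)
  end.

Fixpoint tr (p : formula S) : formula S :=
  match p with
  | FPos a => FPos a | FNeg a => FNeg a
  | FOr p q => FOr (tr p) (tr q) | FAnd p q => FAnd (tr p) (tr q)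
  | FEx v p => FEx v (tr p) | FAll v p => FAll v (tr p)
  | FNE => FTilde (emb (neg top))
  | FSqcup p q => FTilde (FAnd (FTilde (tr p)) (FTilde (tr q)))
  | FTilde p => FTilde (tr p)
  end.

Section Asec.
Variable A : structure S.

Fixpoint T (x : fo) (s : assignment A) : Prop :=
  match x with
  | OLit a b => lit_sat s a b
  | OOr p q => T p s \/ T q s
  | OAnd p q => T p s /\ T q s
  | OEx v p => exists m, T p (upd s v m)
  | OAll v p => forall m, T p (upd s v m)
  end.

Lemma flat x : forall X : team A, sat (emb x) X <-> forall s, X s -> T x s.
Proof.
induction x as [a b|p IHp q IHq|p IHp q IHq|v p IHp|v p IHp]; intro X; simpl.
- destruct b; simpl; reflexivity.
- split.
  + intros [Y [Z [HX [HY HZ]]]] s Hs. apply HX in Hs as [Hs|Hs].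
    * left; exact (proj1 (IHp Y) HY s Hs).
    * right; exact (proj1 (IHq Z) HZ s Hs).
  + intros H. exists (fun s => X s /\ T p s), (fun s => X s /\ T q s).
    split; [|split].
    * intro s; split.
      -- intro Hs; destruct (H s Hs) as [h|h]; [left|right]; split; assumption.
      -- intros [[h _]|[h _]]; assumption.
    * apply IHp; intros s [_ h]; exact h.
    * apply IHq; intros s [_ h]; exact h.
- split.
  + intros [h1 h2] s Hs. split; [exact (proj1 (IHp X) h1 s Hs)|exact (proj1 (IHq X) h2 s Hs)].
  + intros H. split; [apply IHp|apply IHq]; intros s Hs; destruct (H s Hs); assumption.
- split.
  + intros [F [HF HS]] s Hs. destruct (HF s Hs) as [m Hm]. exists m.
    apply (proj1 (IHp _) HS). exists s, m. auto.
  + intros H. exists (fun s m => T p (upd s v m)). split; [exact H|].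
    apply IHp. intros s' [s [m [_ [Hm ->]]]]. exact Hm.
- split.
  + intros HS s Hs m. apply (proj1 (IHp _) HS). exists s, m. auto.
  + intros H. apply IHp. intros s' [s [m [Hs ->]]]. apply H; exact Hs.
Qed.

Lemma tval_fun t : forall s m1 m2, @Defs.tval S A s t m1 -> @Defs.tval S A s t m2 -> m1 = m2.
Proof.
induction t as [x|f a IH]; simpl; intros s m1 m2.
- intros H1 H2. rewrite H1 in H2. injection H2; auto.
- intros [ms1 [H1 ->]] [ms2 [H2 ->]]. f_equal. apply functional_extensionality.
  intro i. exact (IH i s _ _ (H1 i) (H2 i)).
Qed.

Lemma tvals_ex n (a : 'I_n -> term S) s :
  (forall i, exists m, @Defs.tval S A s (a i) m) ->
  exists ms, forall i, @Defs.tval S A s (a i) (ms i).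
Proof.
intro H. exists (fun i => proj1_sig (constructive_indefinite_description _ (H i))).
intro i. exact (proj2_sig (constructive_indefinite_description _ (H i))).
Qed.

Lemma tval_ex t : forall s, (forall x, occurs x t -> s x <> None) -> exists m, @Defs.tval S A s t m.
Proof.
induction t as [x|f a IH]; simpl; intros s H.
- specialize (H x Logic.eq_refl). destruct (s x) as [c|] eqn:E; [exists c; reflexivity|congruence].
- have Hi : forall i, exists m, @Defs.tval S A s (a i) m.
    intro i. apply IH. intros x hx. apply H. exists i. exact hx.
  destruct (tvals_ex Hi) as [ms Hms]. exists (funI ms), ms. split; auto.
Qed.

Lemma lit_neg (s : assignment A) a b : (forall x, occurs_atom x a -> s x <> None) ->
  (lit_sat s a (~~ b) <-> ~ lit_sat s a b).
Proof.
destruct a as [t1 t2|R a]; simpl; intro H.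
- destruct (@tval_ex t1 s (fun x hx => H x (or_introl hx))) as [m1 h1].
  destruct (@tval_ex t2 s (fun x hx => H x (or_intror hx))) as [m2 h2].
  destruct b; simpl; split.
  + intros [n1 [n2 [g1 [g2 gn]]]] [k1 [k2 [f1 [f2 fe]]]]. apply gn.
    rewrite (tval_fun g1 f1) (tval_fun g2 f2). exact fe.
  + intro hn. exists m1, m2. split; [exact h1|split; [exact h2|]].
    intro e. apply hn. exists m1, m2. auto.
  + intros [n1 [n2 [g1 [g2 gn]]]] [k1 [k2 [f1 [f2 fe]]]]. apply fe.
    rewrite -(tval_fun g1 f1) -(tval_fun g2 f2). exact gn.
  + intro hn. exists m1, m2. split; [exact h1|split; [exact h2|]].
    destruct (classic (m1 = m2)) as [e|e]; [exact e|]. exfalso; apply hn.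
    exists m1, m2. auto.
- have Hi : forall i, exists m, @Defs.tval S A s (a i) m.
    intro i. apply tval_ex. intros x hx. apply H. exists i. exact hx.
  destruct (tvals_ex Hi) as [ms Hms].
  have U : forall ms1 ms2 : 'I_(rarity R) -> carrier A,
      (forall i, @Defs.tval S A s (a i) (ms1 i)) -> (forall i, @Defs.tval S A s (a i) (ms2 i)) -> ms1 = ms2.
    intros ms1 ms2 g1 g2. apply functional_extensionality. intro i. exact (tval_fun (g1 i) (g2 i)).
  destruct b; simpl; split.
  + intros [n1 [g1 gn]] [k1 [f1 fe]]. rewrite (U _ _ g1 f1) in gn. exact (gn fe).
  + intro hn. exists ms. split; [exact Hms|]. intro r. apply hn. exists ms. auto.
  + intros [n1 [g1 gn]] [k1 [f1 fe]]. rewrite (U _ _ g1 f1) in gn. exact (fe gn).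
  + intro hn. exists ms. split; [exact Hms|]. destruct (classic (relI ms)) as [r|r]; [exact r|].
    exfalso; apply hn. exists ms. auto.
Qed.

Lemma upd_def (s : assignment A) v m x : (x <> v -> s x <> None) -> upd s v m x <> None.
Proof. rewrite /upd. case: eqP => [_ _|hne H]; [discriminate|exact (H hne)]. Qed.

Lemma T_neg x : forall s, (forall y, free y (emb x) -> s y <> None) -> (T (neg x) s <-> ~ T x s).
Proof.
induction x as [a b|p IHp q IHq|p IHp q IHq|v p IHp|v p IHp]; intros s H.
- destruct b; [exact (lit_neg true H)|exact (lit_neg false H)].
- simpl. pose proof (IHp s (fun y hy => H y (or_introl hy))) as E1.
  pose proof (IHq s (fun y hy => H y (or_intror hy))) as E2. tauto.
- simpl. pose proof (IHp s (fun y hy => H y (or_introl hy))) as E1.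
  pose proof (IHq s (fun y hy => H y (or_intror hy))) as E2.
  destruct (classic (T p s)); tauto.
- simpl. have Hm : forall m, T (neg p) (upd s v m) <-> ~ T p (upd s v m).
    intro m. apply IHp. intros y hy. apply upd_def. intro hne. apply H. simpl. split; assumption.
  split.
  + intros h [m hm]. exact (proj1 (Hm m) (h m) hm).
  + intros h m. apply Hm. intro hm. apply h. exists m. exact hm.
- simpl. have Hm : forall m, T (neg p) (upd s v m) <-> ~ T p (upd s v m).
    intro m. apply IHp. intros y hy. apply upd_def. intro hne. apply H. simpl. split; assumption.
  split.
  + intros [m hm] h. exact (proj1 (Hm m) hm (h m)).
  + intro h. apply not_all_ex_not in h as [m hm]. exists m. apply Hm. exact hm.
Qed.

Lemma T_top s : T top s.
Proof. simpl. intro m. exists m, m. split; [|split]; reflexivity. Qed.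

Lemma T_negtop s : ~ T (neg top) s.
Proof.
intro h. have E := @T_neg top s (fun x hx => False_ind _ (fv_top hx)).
exact (proj1 E h (T_top s)).
Qed.

Definition csat (C : clause) (X : team A) :=
  (forall s, X s -> T C.1 s) /\ (forall b, List.In b C.2 -> exists s, X s /\ T b s).
Definition nsat (N : list clause) (X : team A) := exists C, List.In C N /\ csat C X.

Lemma csat_cor C1 C2 X :
  (exists Y Z : team A, (forall s, X s <-> Y s \/ Z s) /\ csat C1 Y /\ csat C2 Z)
  <-> csat (cor C1 C2) X.
Proof.
destruct C1 as [a1 b1], C2 as [a2 b2]; unfold csat, cor; simpl. split.
- intros [Y [Z [HX [[HY1 HY2] [HZ1 HZ2]]]]]. split.
  + intros s Hs; apply HX in Hs as [h|h]; [left; auto|right; auto].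
  + intros b Hb. apply List.in_app_or in Hb as [Hb|Hb];
      apply List.in_map_iff in Hb as [b' [<- Hb']].
    * destruct (HY2 b' Hb') as [s [Hs Ht]]. exists s.
      split; [apply HX; left; exact Hs|]. simpl. split; [apply HY1; exact Hs|exact Ht].
    * destruct (HZ2 b' Hb') as [s [Hs Ht]]. exists s.
      split; [apply HX; right; exact Hs|]. simpl. split; [apply HZ1; exact Hs|exact Ht].
- intros [H1 H2]. exists (fun s => X s /\ T a1 s), (fun s => X s /\ T a2 s). split.
  + intro s; split.
    * intro Hs; destruct (H1 s Hs); [left|right]; split; assumption.
    * intros [[h _]|[h _]]; assumption.
  + split; split.
    * intros s [_ h]; exact h.
    * intros b Hb. destruct (H2 (OAnd a1 b)) as [s [Hs [Ha Hb']]].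
      -- apply List.in_or_app; left; apply (List.in_map (OAnd a1)); exact Hb.
      -- exists s; auto.
    * intros s [_ h]; exact h.
    * intros b Hb. destruct (H2 (OAnd a2 b)) as [s [Hs [Ha Hb']]].
      -- apply List.in_or_app; right; apply (List.in_map (OAnd a2)); exact Hb.
      -- exists s; auto.
Qed.

Lemma csat_cand C1 C2 X : csat (cand C1 C2) X <-> csat C1 X /\ csat C2 X.
Proof.
destruct C1 as [a1 b1], C2 as [a2 b2]; unfold csat, cand; simpl. split.
- intros [H1 H2]. split; split.
  + intros s Hs; destruct (H1 s Hs); assumption.
  + intros b Hb; apply H2; apply List.in_or_app; left; exact Hb.
  + intros s Hs; destruct (H1 s Hs); assumption.
  + intros b Hb; apply H2; apply List.in_or_app; right; exact Hb.
- intros [[H1 H2] [H3 H4]]. split.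
  + intros s Hs; split; auto.
  + intros b Hb; apply List.in_app_or in Hb as [Hb|Hb]; auto.
Qed.

Lemma csat_cex v C X :
  (exists F : assignment A -> carrier A -> Prop, (forall s, X s -> exists m, F s m) /\
     csat C (fun s' => exists s m, X s /\ F s m /\ s' = upd s v m)) <-> csat (cex v C) X.
Proof.
destruct C as [a b]; unfold csat, cex; simpl. split.
- intros [F [HF [H1 H2]]]. split.
  + intros s Hs. destruct (HF s Hs) as [m Hm]. exists m. apply H1. exists s, m; auto.
  + intros x Hx. apply List.in_map_iff in Hx as [x' [<- Hx']].
    destruct (H2 x' Hx') as [s' [[s [m [Hs [Hm ->]]]] Ht]].
    exists s. split; [exact Hs|]. exists m. split; [apply H1; exists s, m; auto|exact Ht].
- intros [H1 H2]. exists (fun s m => T a (upd s v m)). split; [exact H1|]. split.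
  + intros s' [s [m [_ [Hm ->]]]]; exact Hm.
  + intros x Hx. destruct (H2 (OEx v (OAnd a x))) as [s [Hs [m [Ha Hb]]]].
    * apply (List.in_map (fun b => OEx v (OAnd a b))); exact Hx.
    * exists (upd s v m). split; [exists s, m; auto|exact Hb].
Qed.

Lemma csat_call v C X :
  csat C (fun s' => exists s m, X s /\ s' = upd s v m) <-> csat (call v C) X.
Proof.
destruct C as [a b]; unfold csat, call; simpl. split.
- intros [H1 H2]. split.
  + intros s Hs m. apply H1. exists s, m. auto.
  + intros x Hx. apply List.in_map_iff in Hx as [x' [<- Hx']].
    destruct (H2 x' Hx') as [s' [[s [m [Hs ->]]] Ht]].
    exists s; split; [exact Hs|exists m; exact Ht].
- intros [H1 H2]. split.
  + intros s' [s [m [Hs ->]]]. apply H1; exact Hs.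
  + intros x Hx. destruct (H2 (OEx v x) (List.in_map _ _ _ Hx)) as [s [Hs [m Ht]]].
    exists (upd s v m); split; [exists s, m; auto|exact Ht].
Qed.

Lemma nsat_pair f L1 L2 X :
  nsat (pairwith f L1 L2) X <->
  exists C1 C2, List.In C1 L1 /\ List.In C2 L2 /\ csat (f C1 C2) X.
Proof.
unfold nsat, pairwith. split.
- intros [C [HC Hs]]. apply List.in_map_iff in HC as [[C1 C2] [<- Hin]].
  apply List.in_prod_iff in Hin as [h1 h2]. exists C1, C2. simpl in Hs. auto.
- intros [C1 [C2 [h1 [h2 hs]]]]. exists (f C1 C2). split; [|exact hs].
  apply List.in_map_iff. exists (C1, C2). split; [reflexivity|apply List.in_prod; assumption].
Qed.

Lemma nsat_and L1 L2 X : nsat (pairwith cand L1 L2) X <-> nsat L1 X /\ nsat L2 X.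
Proof.
rewrite /nsat. split.
- intro h. apply nsat_pair in h as [C1 [C2 [h1 [h2 hc]]]]. apply csat_cand in hc as [c1 c2].
  split; [exists C1|exists C2]; auto.
- intros [[C1 [h1 c1]] [C2 [h2 c2]]]. apply nsat_pair. exists C1, C2. split; [exact h1|split; [exact h2|]].
  apply csat_cand; auto.
Qed.

Lemma csat_cneg C X : (forall x, cfree C x -> forall s, X s -> s x <> None) ->
  (nsat (cneg C) X <-> ~ csat C X).
Proof.
destruct C as [a b]. unfold nsat, cneg, csat, cfree; simpl. intro H. split.
- intros [C [HC HS]] [H1 H2]. destruct HC as [<- | HC].
  + simpl in HS. destruct HS as [_ HS]. destruct (HS (neg a) (or_introl Logic.eq_refl)) as [s [Hs Ht]].
    apply (proj1 (@T_neg a s (fun x hx => H x (or_introl hx) s Hs)) Ht). apply H1; exact Hs.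
  + apply List.in_map_iff in HC as [x [<- Hx]]. simpl in HS. destruct HS as [HS _].
    destruct (H2 x Hx) as [s [Hs Ht]].
    apply (proj1 (@T_neg x s (fun y hy => H y (or_intror (ex_intro _ x (conj Hx hy))) s Hs)) (HS s Hs)).
    exact Ht.
- intro Hn. destruct (classic (forall s, X s -> T a s)) as [Ha|Ha].
  + destruct (classic (forall x, List.In x b -> exists s, X s /\ T x s)) as [Hb|Hb];
      [exfalso; apply Hn; split; assumption|].
    apply not_all_ex_not in Hb as [x Hx]. apply imply_to_and in Hx as [Hin Hno].
    exists (neg x, [::]). split; [right; apply (List.in_map (fun b => (neg b, [::]))); exact Hin|].
    simpl. split; [|intros ? []]. intros s Hs.
    apply (@T_neg x s (fun y hy => H y (or_intror (ex_intro _ x (conj Hin hy))) s Hs)).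
    intro Ht. apply Hno. exists s. auto.
  + apply not_all_ex_not in Ha as [s Hs]. apply imply_to_and in Hs as [Hs Hna].
    exists (top, [:: neg a]). split; [left; reflexivity|]. simpl. split; [intros; apply T_top|].
    intros x [<-|[]]. exists s. split; [exact Hs|].
    apply T_neg; [intros y hy; exact (H y (or_introl hy) s Hs)|exact Hna].
Qed.

Lemma nsat_tneg N X : (forall C x, List.In C N -> cfree C x -> forall s, X s -> s x <> None) ->
  (nsat (tneg N) X <-> forall C, List.In C N -> ~ csat C X).
Proof.
induction N as [|C N IH]; intro H; simpl.
- split; [intros _ C []|intros _; exists (top, [::]); split; [left; reflexivity|]].
  split; [intros; apply T_top|intros ? []].
- pose proof (nsat_and (cneg C) (tneg N) X) as E.
  pose proof (@csat_cneg C X (fun x hx => H C x (or_introl Logic.eq_refl) hx)) as E1.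
  pose proof (IH (fun C' x hC hx => H C' x (or_intror hC) hx)) as E2.
  split.
  + intros h. apply E in h as [h1 h2]. intros C' [<-|hin].
    * apply E1; exact h1.
    * apply E2; assumption.
  + intros h. apply E. split.
    * apply E1; apply h; left; reflexivity.
    * apply E2; intros C' hin; apply h; right; exact hin.
Qed.

Lemma sat_wit b X : sat (wit b) X <-> forall x, List.In x b -> exists s, X s /\ T x s.
Proof.
revert X; induction b as [|x b IH]; intro X; simpl.
- split; [intros _ ? []|intros _; exact (proj2 (flat top X) (fun s _ => T_top s))].
- split.
  + intros [Y [Z [HYZ [[HY [s Hs]] HZ]]]] x' [<-|hin].
    * exists s. split; [apply HYZ; left; exact Hs|apply (proj1 (flat x Y) HY); exact Hs].
    * destruct (proj1 (IH Z) HZ x' hin) as [s' [hs' ht]]. exists s'.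
      split; [apply HYZ; right; exact hs'|exact ht].
  + intro h. destruct (h x (or_introl Logic.eq_refl)) as [s [Hs Ht]].
    exists (fun s => X s /\ T x s), X. split.
    * intro s0; split; [intro; right; assumption|intros [[h0 _]|h0]; assumption].
    * split; [split|].
      -- apply flat; intros s0 [_ h0]; exact h0.
      -- exists s; auto.
      -- apply IH. intros x' hin; apply h; right; exact hin.
Qed.

Lemma sat_ctoF C X : sat (ctoF C) X <-> csat C X.
Proof.
destruct C as [a b]; unfold ctoF, csat; simpl.
pose proof (flat a X). pose proof (sat_wit b X). tauto.
Qed.

Lemma sat_bot (X : team A) : ~ sat bot X.
Proof.
intro h. apply sat_ctoF in h as [_ h]. destruct (h (neg top) (or_introl Logic.eq_refl)) as [s [_ Ht]].
exact (T_negtop Ht).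
Qed.

Lemma sat_toF N X : sat (toF N) X <-> nsat N X.
Proof.
induction N as [|C N IH]; simpl.
- split; [intro h; exfalso; exact (sat_bot h)|intros [C [[] _]]].
- split.
  + intros [h|h].
    * exists C; split; [left; reflexivity|apply sat_ctoF; exact h].
    * apply IH in h as [C' [hC h']]. exists C'; split; [right; exact hC|exact h'].
  + intros [C' [[<-|hC] h]].
    * left; apply sat_ctoF; exact h.
    * right; apply IH; exists C'; auto.
Qed.

Lemma sat_tr p : forall X : team A, sat (tr p) X <-> sat p X.
Proof.
induction p as [a|a|p1 IH1 p2 IH2|p1 IH1 p2 IH2|v p IH|v p IH| |p1 IH1 p2 IH2|p IH];
  intro X; simpl.
- reflexivity.
- reflexivity.
- split; intros [Y [Z [h [hY hZ]]]]; exists Y, Z; split; [exact h| |exact h|];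
    (split; [apply IH1|apply IH2]; assumption).
- split; intros [h1 h2]; split; first [apply IH1 | apply IH2]; assumption.
- split; intros [F [HF h]]; exists F; split; [exact HF|apply IH; exact h|exact HF|apply IH; exact h].
- apply IH.
- pose proof (flat (neg top) X) as E. split.
  + intro h. apply NNPP; intro hn; apply h; apply E; intros s Hs; exfalso; apply hn; exists s; exact Hs.
  + intros [s Hs] h. exact (T_negtop (proj1 E h s Hs)).
- pose proof (IH1 X). pose proof (IH2 X). destruct (classic (sat p1 X)); tauto.
- pose proof (IH X). tauto.
Qed.

End Asec.

Lemma emb_ok x : in_FO_NE_sqcup (emb x).
Proof. induction x; simpl; try (destruct b); simpl; auto. Qed.
Lemma emb_tilde x : in_FO_tilde (emb x).
Proof. induction x; simpl; try (destruct b); simpl; auto. Qed.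
Lemma wit_ok b : in_FO_NE_sqcup (wit b).
Proof. induction b; simpl; [exact I|split; [split; [apply emb_ok|exact I]|exact IHb]]. Qed.
Lemma toF_ok N : in_FO_NE_sqcup (toF N).
Proof.
induction N as [|C N IH].
- unfold toF, bot, ctoF. exact (conj (emb_ok top) (wit_ok [:: neg top])).
- exact (conj (conj (emb_ok _) (wit_ok _)) IH).
Qed.
Lemma tr_ok p : in_FO_tilde (tr p).
Proof. induction p; simpl; auto using emb_tilde. Qed.

Lemma fv_cand C1 C2 x : cfree (cand C1 C2) x -> cfree C1 x \/ cfree C2 x.
Proof.
destruct C1 as [a1 b1], C2 as [a2 b2]; unfold cfree, cand; simpl.
intros [[h|h]|[b [hb h]]]; [left; left; exact h|right; left; exact h|].
apply List.in_app_or in hb as [hb|hb]; [left|right]; right; exists b; auto.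
Qed.

Lemma fv_pair L1 L2 C x : List.In C (pairwith cand L1 L2) -> cfree C x ->
  exists C', (List.In C' L1 \/ List.In C' L2) /\ cfree C' x.
Proof.
unfold pairwith. intros HC hx. apply List.in_map_iff in HC as [[C1 C2] [<- Hin]].
apply List.in_prod_iff in Hin as [h1 h2]. apply fv_cand in hx as [hx|hx];
  [exists C1|exists C2]; auto.
Qed.

Lemma fv_cneg C C' x : List.In C' (cneg C) -> cfree C' x -> cfree C x.
Proof.
destruct C as [a b]; unfold cneg, cfree; simpl. intros [<-|hin] hx; simpl in hx.
- destruct hx as [h|[x' [[<-|[]] h]]]; [exfalso; exact (fv_top h)|left; apply free_neg; exact h].
- apply List.in_map_iff in hin as [x' [<- hx']]. simpl in hx.
  destruct hx as [h|[? [[] _]]]. right. exists x'. split; [exact hx'|apply free_neg; exact h].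
Qed.

Lemma fv_tneg N (P : nat -> Prop) : (forall C x, List.In C N -> cfree C x -> P x) ->
  forall C x, List.In C (tneg N) -> cfree C x -> P x.
Proof.
induction N as [|C0 N IH]; simpl; intros H C x hC hx.
- destruct hC as [<-|[]]. unfold cfree in hx; simpl in hx.
  destruct hx as [h|[? [[] _]]]. exfalso; exact (fv_top h).
- destruct (fv_pair hC hx) as [C' [[h|h] hx']].
  + apply (H C0 x (or_introl Logic.eq_refl)). exact (fv_cneg h hx').
  + apply (IH (fun C x hC hx => H C x (or_intror hC) hx) C' x h hx').
Qed.

Lemma nf_exists p : in_FO_tilde p -> exists N : list clause,
  (forall C x, List.In C N -> cfree C x -> free x p) /\
  forall (A : structure S) (X : team A),
    (forall s, X s -> forall x, free x p -> s x <> None) -> (sat p X <-> nsat N X).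
Proof.
induction p as [a|a|p IHp q IHq|p IHp q IHq|v p IH|v p IH| |p IHp q IHq|p IH]; simpl.
- intros _. exists [:: (OLit a true, [::])]. split.
  + intros C x [<-|[]] [hx|[b [[] _]]]; exact hx.
  + intros A X _. unfold nsat, csat. split.
    * intro h. exists (OLit a true, [::]). split; [left; reflexivity|]. split; [exact h|intros ? []].
    * intros [C [[<-|[]] [h _]]]; exact h.
- intros _. exists [:: (OLit a false, [::])]. split.
  + intros C x [<-|[]] [hx|[b [[] _]]]; exact hx.
  + intros A X _. unfold nsat, csat. split.
    * intro h. exists (OLit a false, [::]). split; [left; reflexivity|]. split; [exact h|intros ? []].
    * intros [C [[<-|[]] [h _]]]; exact h.
- intros [hp hq]. destruct (IHp hp) as [N1 [F1 S1]]. destruct (IHq hq) as [N2 [F2 S2]].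
  exists (pairwith cor N1 N2). split.
  + intros C x HC hx. unfold pairwith in HC.
    apply List.in_map_iff in HC as [[C1 C2] [<- Hin]].
    apply List.in_prod_iff in Hin as [h1 h2].
    destruct C1 as [a1 b1], C2 as [a2 b2]. unfold cfree, cor in hx; simpl in hx.
    destruct hx as [[h|h]|[b [hb h]]].
    * left; apply (F1 _ x h1); left; exact h.
    * right; apply (F2 _ x h2); left; exact h.
    * apply List.in_app_or in hb as [hb|hb]; apply List.in_map_iff in hb as [b' [<- hb']];
        simpl in h; destruct h as [h|h].
      -- left; apply (F1 _ x h1); left; exact h.
      -- left; apply (F1 _ x h1); right; exists b'; auto.
      -- right; apply (F2 _ x h2); left; exact h.
      -- right; apply (F2 _ x h2); right; exists b'; auto.
  + intros A X HX. split.
    * intros [Y [Z [HYZ [HY HZ]]]].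
      have HYd : forall s, Y s -> forall x, free x p -> s x <> None.
        intros s Hs x hx; exact (HX s (proj2 (HYZ s) (or_introl Hs)) x (or_introl hx)).
      have HZd : forall s, Z s -> forall x, free x q -> s x <> None.
        intros s Hs x hx; exact (HX s (proj2 (HYZ s) (or_intror Hs)) x (or_intror hx)).
      apply (S1 A Y HYd) in HY as [C1 [h1 hc1]]. apply (S2 A Z HZd) in HZ as [C2 [h2 hc2]].
      apply nsat_pair. exists C1, C2. split; [exact h1|split; [exact h2|]].
      apply csat_cor. exists Y, Z. auto.
    * intro h. apply nsat_pair in h as [C1 [C2 [h1 [h2 hc]]]].
      apply csat_cor in hc as [Y [Z [HYZ [hY hZ]]]]. exists Y, Z. split; [exact HYZ|split].
      -- apply (S1 A Y); [intros s Hs x hx; exact (HX s (proj2 (HYZ s) (or_introl Hs)) x (or_introl hx))|].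
         exists C1; auto.
      -- apply (S2 A Z); [intros s Hs x hx; exact (HX s (proj2 (HYZ s) (or_intror Hs)) x (or_intror hx))|].
         exists C2; auto.
- intros [hp hq]. destruct (IHp hp) as [N1 [F1 S1]]. destruct (IHq hq) as [N2 [F2 S2]].
  exists (pairwith cand N1 N2). split.
  + intros C x HC hx. destruct (fv_pair HC hx) as [C' [[h|h] hx']].
    * left; exact (F1 C' x h hx').
    * right; exact (F2 C' x h hx').
  + intros A X HX. have E := nsat_and N1 N2 X.
    have E1 := S1 A X (fun s Hs x hx => HX s Hs x (or_introl hx)).
    have E2 := S2 A X (fun s Hs x hx => HX s Hs x (or_intror hx)).
    tauto.
- intro hp. destruct (IH hp) as [N [Fv Sm]]. exists (List.map (cex v) N). split.
  + intros C x HC hx. apply List.in_map_iff in HC as [[a b] [<- hC]].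
    unfold cfree, cex in hx; simpl in hx.
    destruct hx as [[hne h]|[b' [hb h]]].
    * split; [exact hne|]. apply (Fv _ x hC); left; exact h.
    * apply List.in_map_iff in hb as [b0 [<- hb0]]. simpl in h.
      destruct h as [hne [h|h]]; split; try exact hne; apply (Fv _ x hC).
      -- left; exact h.
      -- right; exists b0; auto.
  + intros A X HX.
    have inv : forall F : assignment A -> carrier A -> Prop,
        forall s', (exists s m, X s /\ F s m /\ s' = upd s v m) ->
        forall x, free x p -> s' x <> None.
      intros F s' [s [m [Hs [_ ->]]]] x hx. apply upd_def. intro hne.
      apply (HX s Hs x); split; assumption.
    split.
    * intros [F [HF Hp]]. apply (Sm A _ (inv F)) in Hp as [C [hC hc]].
      exists (cex v C). split; [apply List.in_map; exact hC|]. apply csat_cex. exists F. auto.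
    * intros [C' [hC' hc]]. apply List.in_map_iff in hC' as [C [<- hC]].
      apply csat_cex in hc as [F [HF hc]]. exists F. split; [exact HF|].
      apply (Sm A _ (inv F)). exists C; auto.
- intro hp. destruct (IH hp) as [N [Fv Sm]]. exists (List.map (call v) N). split.
  + intros C x HC hx. apply List.in_map_iff in HC as [[a b] [<- hC]].
    unfold cfree, call in hx; simpl in hx.
    destruct hx as [[hne h]|[b' [hb h]]].
    * split; [exact hne|]. apply (Fv _ x hC); left; exact h.
    * apply List.in_map_iff in hb as [b0 [<- hb0]]. simpl in h.
      destruct h as [hne h]; split; [exact hne|]. apply (Fv _ x hC). right; exists b0; auto.
  + intros A X HX.
    have inv : forall s', (exists s m, X s /\ s' = upd s v m) ->
        forall x, free x p -> s' x <> None.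
      intros s' [s [m [Hs ->]]] x hx. apply upd_def. intro hne.
      apply (HX s Hs x); split; assumption.
    split.
    * intros Hp. apply (Sm A _ inv) in Hp as [C [hC hc]].
      exists (call v C). split; [apply List.in_map; exact hC|]. apply csat_call. exact hc.
    * intros [C' [hC' hc]]. apply List.in_map_iff in hC' as [C [<- hC]].
      apply csat_call in hc. apply (Sm A _ inv). exists C; auto.
- intros [].
- intros [].
- intro hp. destruct (IH hp) as [N [Fv Sm]]. exists (tneg N). split.
  + exact (fv_tneg Fv).
  + intros A X HX.
    have hfv : forall C x, List.In C N -> cfree C x -> forall s, X s -> s x <> None.
      intros C x hC hx s Hs; apply (HX s Hs x); exact (Fv C x hC hx).
    have E := nsat_tneg hfv. have E' := Sm A X HX. split.
    * intro hn. apply E. intros C hC hc. apply hn. apply E'. exists C; auto.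
    * intros h hp'. destruct (proj1 E' hp') as [C [hC hc]]. exact (proj1 E h C hC hc).
Qed.

End FOsec.

Theorem mainTheorem1 :
  forall S : Sig,
    (forall p : formula S, in_FO_tilde p ->
       exists q : formula S, in_FO_NE_sqcup q /\ equivalent p q) /\
    (forall q : formula S, in_FO_NE_sqcup q ->
       exists p : formula S, in_FO_tilde p /\ equivalent q p).
Proof.
intro S. split.
- intros p hp. destruct (nf_exists hp) as [N [F Hs]]. exists (toF N).
  split; [apply toF_ok|]. intros A _ V X HV Hp _.
  have HX : forall s, X s -> forall x, free x p -> s x <> None :=
    fun s Hs x hx => proj2 (HV s Hs x) (Hp x hx).
  split.
  + intro h; apply sat_toF; apply (Hs A X HX); exact h.
  + intro h; apply (Hs A X HX); apply sat_toF; exact h.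
- intros q _. exists (tr q). split; [apply tr_ok|].
  intros A _ V X _ _ _. symmetry; apply sat_tr.
Qed.
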